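(* Let $G$ be a connected graph, let $M \subseteq V(G)$ be a longest path transversal of $G$, and let $D \subseteq M$ be a connected dominating set of $G[M]$. Let $C_1,\dots,C_t$ be the connected components of $G \setminus M$, and let $C_{\max}$ be a path-maximal component with respect to $M$. Let $S \subseteq M$ be a set that dominates $\mathsf{bd}(C_{\max},M)$. Then $D \cup S$ is a longest path transversal of $G$.
   Context: All graphs are finite, simple. A longest path of a connected graph $G$ is a path of maximum length (number of edges) in $G$. A longest path transversal of $G$ is a set $S \subseteq V(G)$ such that every longest path of $G$ contains at least one vertex of $S$. For $X,Y\subseteq V(G)$, $\mathsf{bd}(X,Y)=\{x\in X : x \text{ has a neighbor in } Y\}$. A set $D$ is a connected dominating set of a graph $F$ if $F[D]$ is connected and every vertex of $F$ is in $D$ or adjacent to a vertex of $D$; a set $S$ dominates a set $Z$ if every vertex of $Z$ is in $S$ or has a neighbor in $S$. Given $M\subseteq V(G)$ and the components $C_1,\dots,C_t$ of $G\setminus M$, let $t_i$ be the length of a longest path of $G[C_i]$ having at least one endpoint in $\mathsf{bd}(C_i,M)$; a component $C_{\max}$ is path-maximal with respect to $M$ if $t_{\max}\ge t_i$ for all $1\le i\le t$. *)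

(* Defs.v *)
(* A simple graph is a symmetric irreflexive relation e on a finType T. *)
From mathcomp Require Import all_boot.
Set Implicit Arguments. Unset Strict Implicit. Unset Printing Implicit Defensive.

Section Graphs.
Variables (T : finType) (e : rel T).

Definition gpath (A : {set T}) (p : seq T) : bool :=
  if p is x :: q then [&& path e x q, uniq p & all (fun v => v \in A) p]
  else false.

Definition plen (p : seq T) : nat := (size p).-1.

Definition longest_path (p : seq T) : Prop :=
  gpath setT p /\ forall q, gpath setT q -> plen q <= plen p.

Definition lp_transversal (S : {set T}) : Prop :=
  forall p, longest_path p -> has (fun v => v \in S) p.

Definition connected_set (A : {set T}) : Prop :=
  forall x y, x \in A -> y \in A ->
    exists p, [/\ gpath A p, head x p = x & last x p = y].

Definition bd (X Y : {set T}) : {set T} := [set x in X | [exists y in Y, e x y]].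

Definition dominates (S Z : {set T}) : Prop :=
  forall z, z \in Z -> z \in S \/ exists2 s, s \in S & e z s.

Definition conn_dom_set (D F : {set T}) : Prop :=
  [/\ D \subset F, connected_set D & dominates D F].

Definition component_of_minus (M C : {set T}) : Prop :=
  [/\ C != set0, C \subset ~: M, connected_set C &
      forall x y, x \in C -> y \notin M -> e x y -> y \in C].

Definition endpoint_in (B : {set T}) (p : seq T) : bool :=
  if p is x :: q then (x \in B) || (last x q \in B) else false.

Definition bd_path (M C : {set T}) (p : seq T) : bool :=
  gpath C p && endpoint_in (bd C M) p.

Definition path_maximal (M Cmax : {set T}) : Prop :=
  component_of_minus M Cmax /\
  exists2 q, bd_path M Cmax q &
    forall C p, component_of_minus M C -> bd_path M C p -> plen p <= plen q.

End Graphs.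

(* Main.v *)
Require Import Defs.
From mathcomp Require Import all_boot.
From mathcomp Require Import zify.
Set Implicit Arguments. Unset Strict Implicit. Unset Printing Implicit Defensive.

Lemma gpathP (T : finType) (e : rel T) (A : {set T}) p :
  gpath e A p <-> [/\ p != [::], sorted e p, uniq p & {subset p <= A}].
Proof.
case: p => [|x q] /=; first by split=> // -[].
split.
  by case/and3P=> h1 h2 h3; split => //; apply/allP.
case=> _ h1 h2 h3; rewrite /= h1 h2 (h3 x (mem_head _ _)) /=.
by apply/allP => z zq; apply: h3; rewrite inE zq orbT.
Qed.


Lemma sorted_rev_sym (T : eqType) (e : rel T) p :
  symmetric e -> sorted e (rev p) = sorted e p.
Proof.
move=> es; rewrite rev_sorted.
case: p => //= x p; elim: p x => //= y p IH x; by rewrite IH es.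
Qed.

Lemma sorted_cat_cons (T : eqType) (e : rel T) r x t :
  sorted e (r ++ x :: t) = sorted e (rcons r x) && path e x t.
Proof.
case: r => [|y r] //=; by rewrite cat_path rcons_path /= andbA.
Qed.

Lemma split_has (T : eqType) (P : pred T) s :
  has P s -> exists a x b, [/\ s = a ++ x :: b, P x & ~~ has P a].
Proof.
elim: s => //= y s IH; case Py: (P y) => /=.
  by move=> _; exists [::], y, s.
case/IH=> a [x [b [-> Px ha]]]; exists (y :: a), x, b; by rewrite /= Py.
Qed.

Lemma uniq_insert (T : eqType) (l1 Y l2 : seq T) :
  uniq (l1 ++ l2) -> uniq Y -> ~~ has (mem Y) (l1 ++ l2) -> uniq (l1 ++ Y ++ l2).
Proof.
move=> u1 uY h.
have p : perm_eq (l1 ++ Y ++ l2) (Y ++ l1 ++ l2) by rewrite perm_catCA.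
rewrite (perm_uniq p) cat_uniq uY u1 h.
by [].
Qed.

Lemma transition (T : finType) (e : rel T) (M C : {set T}) :
  (forall x y, x \in C -> y \notin M -> e x y -> y \in C) ->
  forall r2 r1 x, sorted e (r1 ++ x :: r2) -> x \in C -> has (fun v => v \in M) r2 ->
  exists a u v b, [/\ r1 ++ x :: r2 = a ++ u :: v :: b, u \in C & v \in M].
Proof.
move=> cl; elim=> [|y r2 IH] r1 x //= so xC.
case yM: (y \in M) => /=.
  by move=> _; exists r1, x, y, r2.
move=> hr2.
have exy : e x y by move: so; rewrite sorted_cat_cons => /andP[_] /= /andP[].
have yC : y \in C by apply: cl exy => //; rewrite yM.
have := IH (rcons r1 x) y; rewrite cat_rcons; by move/(_ so yC hr2).
Qed.

Lemma bridge (T : finType) (e : rel T) (M D S : {set T}) s m :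
  symmetric e -> conn_dom_set e D M -> s \in S -> S \subset M -> m \in M -> m \notin D ->
  exists X, [/\ sorted e (s :: X), uniq (s :: X), e (last s X) m &
                {subset s :: X <= D :|: S}].
Proof.
move=> es [sDM cD domD] sS sSM mM mD.
have sM : s \in M by apply: (subsetP sSM).
case: (domD m mM) => [|[d' d'D emd']]; first by rewrite (negbTE mD).
case: (domD s sM) => [sD|[d dD esd]].
  case: (cD s d' sD d'D) => [[|y X] [/gpathP[_ so u sub] hd ld]] //.
  simpl in hd, ld; subst y.
  exists X; split => //; first by rewrite ld es.
  by move=> z /sub zD; rewrite inE zD.
case sD: (s \in D).
  case: (cD s d' sD d'D) => [[|y X] [/gpathP[_ so u sub] hd ld]] //.
  simpl in hd, ld; subst y.
  exists X; split => //; first by rewrite ld es.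
  by move=> z /sub zD; rewrite inE zD.
case: (cD d d' dD d'D) => [[|y X] [/gpathP[_ so u sub] hd ld]] //.
simpl in hd, ld.
subst y.
exists (d :: X); split => //=.
- by rewrite esd.
- move: u => /= ->; rewrite andbT; apply/negP => /sub; by rewrite sD.
- by rewrite ld es.
- move=> z; rewrite inE => /orP[/eqP ->|/sub zD]; by rewrite inE ?sS ?zD ?orbT.
Qed.

Lemma path_notin (T : finType) (e : rel T) (M : {set T}) x p :
  path [rel a b | [&& e a b, a \notin M & b \notin M]] x p -> all (fun v => v \notin M) p.
Proof.
elim: p x => //= y p IH x /andP[/and3P[_ _ yM] /IH]; by rewrite yM.
Qed.

Lemma path_er (T : finType) (e : rel T) (M : {set T}) x p :
  path e x p -> all (fun v => v \notin M) (x :: p) ->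
  path [rel a b | [&& e a b, a \notin M & b \notin M]] x p.
Proof.
elim: p x => //= y p IH x /andP[exy py] /and3P[xM yM ap].
by rewrite exy xM yM /= IH //= yM.
Qed.

Lemma comp_exists (T : finType) (e : rel T) (M : {set T}) a0 a' :
  symmetric e -> path e a0 a' -> all (fun v => v \notin M) (a0 :: a') ->
  exists C, component_of_minus e M C /\ {subset a0 :: a' <= C}.
Proof.
move=> es pa alla.
set er := [rel a b | [&& e a b, a \notin M & b \notin M]].
have ersym : symmetric er.
  by move=> x y; rewrite /er /= es; case: (x \in M); case: (y \in M).
have a0M : a0 \notin M by case/andP: alla.
exists [set y | (y \notin M) && connect er a0 y]; split; last first.
  move=> z zin; rewrite inE (allP alla z zin) /=.
  exact: (path_connect (path_er pa alla)).
split.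
- by apply/set0Pn; exists a0; rewrite inE a0M connect0.
- by apply/subsetP => y; rewrite !inE => /andP[].
- move=> x y; rewrite !inE => /andP[xM cx] /andP[yM cy].
  have cxy : connect er x y.
    by apply: connect_trans cy; rewrite (sym_connect_sym ersym).
  case/connectP: cxy => p px ->.
  case/shortenP: px => p' pp' up' _.
  exists (x :: p'); split => //.
  apply/gpathP; split => //.
    by apply: sub_path pp' => a b /= /andP[].
  move=> z zin; rewrite inE; apply/andP; split.
    move: zin; rewrite inE => /orP[/eqP ->//|zin].
    exact: (allP (path_notin pp')).
  apply: connect_trans cx _; exact: (path_connect pp').
- move=> x y; rewrite !inE => /andP[xM cx] yM exy; rewrite yM /=.
  apply: connect_trans cx (connect1 _); by rewrite /er /= exy xM yM.
Qed.

Theorem theorem3p1 (T : finType) (e : rel T) :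
  symmetric e -> irreflexive e -> connected_set e setT ->
  forall M D S Cmax : {set T},
    lp_transversal e M ->
    conn_dom_set e D M ->
    path_maximal e M Cmax ->
    S \subset M -> dominates e S (bd e Cmax M) ->
    lp_transversal e (D :|: S).
Proof.
move=> es ei _ M D S Cmax lpM cdD [[Cne CsM _ Ccl] [q bq maxq]] sSM domS P lpP.
apply/idPn => av.
have hM := lpM P lpP.
case: lpP => /gpathP[Pne Pso Pu _] Pmax.
have maxP : forall R, R != [::] -> sorted e R -> uniq R -> size R <= size P.
  move=> R Rn Rs Ru; have := Pmax R (proj2 (gpathP _ _ _) (And4 Rn Rs Ru (fun z _ => in_setT z))).
  rewrite /plen; move: Rn Pne; rewrite -!size_eq0; case: (size R) => [|r] //; case: (size P) => [|p] //=; lia.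
have CM : forall z, z \in Cmax -> z \notin M by move=> z /(subsetP CsM); rewrite inE.
have DSM : forall z, z \in D :|: S -> z \in M.
  case: cdD => sDM _ _ z; rewrite inE => /orP[/(subsetP sDM)//|/(subsetP sSM)//].
have avz : forall z, z \in P -> z \notin D :|: S.
  by move=> z zP; apply/negP => h; apply: (negP av); apply/hasP; exists z.
have caseB : forall Q, sorted e Q -> uniq Q -> size Q = size P ->
    (forall z, z \in Q -> z \notin D :|: S) ->
    forall a u v b, Q = a ++ u :: v :: b -> u \in Cmax -> v \in M -> False.
  move=> Q Qs Qu Qsz Qav a u v b QE uC vM; subst Q.
  have euv : e u v by move: Qs; rewrite sorted_cat_cons /= => /and3P[].
  have ubd : u \in bd e Cmax M.
    by rewrite inE uC /=; apply/existsP; exists v; rewrite vM.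
  case: (domS u ubd) => [uS|[s sS eus]].
    by move: (Qav u); rewrite mem_cat inE eqxx orbT inE uS orbT => /(_ isT).
  have vD : v \notin D.
    by move: (Qav v); rewrite !mem_cat !inE eqxx !orbT negb_or => /(_ isT) /andP[].
  case: (bridge es cdD sS sSM vM vD) => X [Xs Xu Xl Xsub].
  have n1 : a ++ u :: (s :: X) ++ v :: b != [::] by case: (a).
  have s1 : sorted e (a ++ u :: (s :: X) ++ v :: b).
    move: Qs; rewrite !sorted_cat_cons /= cat_path /= => /andP[-> /andP[_ ->]].
    by rewrite eus Xl andbT; move: Xs => /= ->.
  have u1 : uniq (a ++ u :: (s :: X) ++ v :: b).
    rewrite -cat_rcons; apply: uniq_insert => //; first by rewrite cat_rcons.
    apply/hasP => -[z zQ zY]; move: (Qav z) (Xsub z zY).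
    by rewrite -cat_rcons zQ => /(_ isT) /negbTE ->.
  have := maxP _ n1 s1 u1.
  rewrite -Qsz !size_cat /= !size_cat /=; move: (size a) (size X) (size b) => x1 x2 x3 h; clear -h; lia.
case hC: (has (fun v => v \in Cmax) P).
  case/hasP: hC => x xP xC.
  have [r1 [r2 PE]] : exists r1 r2, P = r1 ++ x :: r2.
    by case/splitPr: xP => r1 r2; exists r1, r2.
  move: hM; rewrite PE has_cat /= (negbTE (CM x xC)) /= => /orP[h1|h2].
    have RE : rev P = rev r2 ++ x :: rev r1 by rewrite PE rev_cat rev_cons cat_rcons.
    have := @transition T e M Cmax Ccl (rev r1) (rev r2) x.
    rewrite -RE sorted_rev_sym // Pso has_rev h1 => /(_ isT xC isT) [a [u [v [b [E uC vM]]]]].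
    apply: (caseB (rev P)) E uC vM.
    - by rewrite sorted_rev_sym.
    - by rewrite rev_uniq.
    - by rewrite size_rev.
    - by move=> z; rewrite mem_rev; apply: avz.
  have := @transition T e M Cmax Ccl r2 r1 x.
  rewrite -PE Pso h2 => /(_ isT xC isT) [a [u [v [b [E uC vM]]]]].
  exact: (caseB P Pso Pu erefl avz _ _ _ _ E uC vM).
case: (split_has hM) => a [m [b [PE mM ha]]].
have [Q0 [u [Qs Qu Qsub ubd Qsz]]] : exists Q0 u, [/\ sorted e (rcons Q0 u),
    uniq (rcons Q0 u), {subset rcons Q0 u <= Cmax}, u \in bd e Cmax M &
    size q = (size Q0).+1].
  move: bq; case: (q) => [|q0 q1] //; case/andP=> /gpathP[_ qs qu qsub] /= /orP[h|h].
    exists (rev q1), q0; rewrite -rev_cons sorted_rev_sym // rev_uniq size_rev.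
    by split => // z; rewrite mem_rev; apply: qsub.
  exists (belast q0 q1), (last q0 q1); rewrite -lastI size_belast; by split.
have uC : u \in Cmax by move: ubd; rewrite inE => /andP[].
case: (domS u ubd) => [uS|[s sS eus]].
  by move: (CM u uC); rewrite (subsetP sSM u uS).
have mP : m \in P by rewrite PE mem_cat inE eqxx orbT.
have mD : m \notin D by move: (avz m mP); rewrite inE negb_or => /andP[].
case: (bridge es cdD sS sSM mM mD) => X [Xs Xu Xl Xsub].
have [Pa Pb] : sorted e (rcons a m) /\ path e m b.
  by apply/andP; rewrite -sorted_cat_cons -PE.
have [ua ub] : uniq a /\ uniq (m :: b).
  by move: Pu; rewrite PE cat_uniq => /and3P[-> _ ->].
have bnd : size a <= (size Q0).+1.
  case: a PE Pa ua ha => [|a0 a'] PE Pa ua ha //.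
  have alla : all (fun v => v \notin M) (a0 :: a').
    by apply/allP => z zin; apply/negP => zM; apply: (negP ha); apply/hasP; exists z.
  move: Pa; rewrite /= rcons_path => /andP[pa elm].
  case: (comp_exists es pa alla) => C [compC subC].
  have gC : gpath e C (a0 :: a') by apply/gpathP; split.
  have lb : last a0 a' \in bd e C M.
    by rewrite inE subC ?mem_last //=; apply/existsP; exists m; rewrite mM.
  have := maxq C (a0 :: a') compC.
  rewrite /bd_path gC /= lb orbT /plen Qsz /= => /(_ isT).
  by rewrite ltnS.
have n1 : Q0 ++ u :: (s :: X) ++ m :: b != [::] by case: (Q0).
have s1 : sorted e (Q0 ++ u :: (s :: X) ++ m :: b).
  rewrite sorted_cat_cons Qs /= cat_path /= eus Xl Pb andbT.
  by move: Xs => /= ->.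
have u1 : uniq (Q0 ++ u :: (s :: X) ++ m :: b).
  rewrite -cat_rcons cat_uniq Qu cat_uniq Xu ub.
  apply/and4P; split => //.
    apply/negP => /hasP[z zin zQ]; move: (CM z (Qsub z zQ)).
    move: zin; rewrite mem_cat => /orP[/Xsub/DSM -> //|zb] _.
    apply: (negP (negbT hC)); apply/hasP; exists z.
      by rewrite PE mem_cat zb orbT.
    exact: Qsub.
  rewrite andbT; apply/negP => /hasP[z zb zX']; have zX := Xsub z zX'.
  move: (avz z); rewrite zX PE mem_cat zb orbT.
  by move/(_ isT).
have := maxP _ n1 s1 u1.
rewrite PE !size_cat /= !size_cat /=.
move: bnd; move: (size a) (size Q0) (size X) (size b) => x1 x2 x3 x4 h1 h2; clear -h1 h2; lia.
Qed.
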